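(* Let $G$ be a group and let $\rho$ and $\rho'$ be finite-dimensional representations of $G$ over a field $k$ with equal determinant. Suppose there exists a normal subgroup $H$ of $G$ such that $\rho|_H$ and $\rho'|_H$ are absolutely irreducible and isomorphic. Then there exists a finite index subgroup $G'$ of $G$ such that $\rho|_{G'}$ and $\rho'|_{G'}$ are isomorphic. *)

(* Defs.v *)
From HB Require Import structures.
From mathcomp Require Import all_boot all_order all_algebra.


Set Implicit Arguments.
Unset Strict Implicit.
Unset Printing Implicit Defensive.

Import GRing.Theory.
Local Open Scope ring_scope.

(* G is an arbitrary (possibly infinite) group: MathComp's groupType. *)

Definition is_rep (G : groupType) (k : fieldType) (n : nat)
  (rho : G -> 'M[k]_n) : Prop :=
  rho 1%g = 1%:M /\ forall x y : G, rho (x * y)%g = rho x *m rho y.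

Definition is_subgroup (G : groupType) (H : {pred G}) : Prop :=
  (1%g \in H) /\ (forall x y, x \in H -> y \in H -> (x * y)%g \in H)
  /\ (forall x, x \in H -> (x^-1)%g \in H).

Definition is_normal_subgroup (G : groupType) (H : {pred G}) : Prop :=
  is_subgroup H /\ forall x h : G, h \in H -> (x^-1 * h * x)%g \in H.

Definition finite_index (G : groupType) (H : {pred G}) : Prop :=
  exists s : seq G, forall g : G, exists2 x, x \in s & (x^-1 * g)%g \in H.

(* The family of matrices sigma restricted to H acts irreducibly on L^n
   (row vectors, matrices acting on the right): n > 0 and the only
   H-invariant subspaces are 0 and the whole space. *)
Definition irreducible_on (G : groupType) (L : fieldType) (n : nat)
  (H : {pred G}) (sigma : G -> 'M[L]_n) : Prop :=
  (0 < n)%N /\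
  forall U : 'M[L]_n,
    (forall h, h \in H -> (U *m sigma h <= U)%MS) ->
    U = 0 \/ row_full U.

(* rho restricted to H is absolutely irreducible: it stays irreducible after
   extension of scalars along any field extension k -> L (equivalently, over
   an algebraic closure of k). *)
Definition abs_irreducible_on (G : groupType) (k : fieldType) (n : nat)
  (H : {pred G}) (rho : G -> 'M[k]_n) : Prop :=
  forall (L : fieldType) (f : {rmorphism k -> L}),
    irreducible_on H (fun g => map_mx f (rho g)).

Definition iso_on (G : groupType) (k : fieldType) (n : nat)
  (H : {pred G}) (rho rho' : G -> 'M[k]_n) : Prop :=
  exists2 P : 'M[k]_n, P \in unitmx &
    forall h, h \in H -> P *m rho h = rho' h *m P.

(* Main.v *)
Require Import Defs.
From HB Require Import structures.
From mathcomp Require Import all_boot all_order all_algebra all_field.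
From Stdlib Require Import Classical.
Set Implicit Arguments. Unset Strict Implicit. Unset Printing Implicit Defensive.
Import GRing.Theory.
Local Open Scope ring_scope.
Lemma irr_factor (F : fieldType) (p : {poly F}) : (1 < size p)%N ->
  exists2 q : {poly F}, irreducible_poly q & q %| p.
Proof.
have [d] := ubnP (size p); elim: d p => // d IHd p leqd p_gt1.
have nz_p : p != 0 by rewrite -size_poly_eq0; case: (size p) p_gt1.
case: (classic (irreducible_poly p)) => [irr|nirr].
  by exists p.
have : exists q : {poly F}, [/\ size q != 1%N, q %| p & ~~ (q %= p)].
  apply: NNPP => nex; apply: nirr; split=> // q q1 qp.
  by apply: contraT => nq; case: nex; exists q.
case=> q [q1 qp nqp].
have nz_q: q != 0 by apply: contraTneq qp => ->; rewrite dvd0p.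
have q_gt1: (1 < size q)%N by rewrite neq_ltn polySpred in q1 *.
have ltq: (size q < size p)%N.
  by rewrite ltn_neqAle dvdp_leq // andbT dvdp_size_eqp.
have [r ir rq] := IHd q (leq_trans ltq leqd) q_gt1.
by exists r => //; apply: dvdp_trans rq qp.
Qed.
Lemma schur_scalar (G : groupType) (k : fieldType) (n : nat) (H : {pred G})
  (sigma : G -> 'M[k]_n.+1) : abs_irreducible_on H sigma ->
  forall A : 'M[k]_n.+1, (forall h, h \in H -> A *m sigma h = sigma h *m A) ->
  A = (A ord0 ord0)%:M.
Proof.
move=> airr A comm.
have [q irr_q qdv] := @irr_factor _ (char_poly A) ltac:(by rewrite size_char_poly).
have [L _ [z qz _]] := irredp_FAdjoin irr_q.
pose f : {rmorphism k -> L} := in_alg L.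
have rz : root (char_poly (map_mx f A)) z.
  rewrite -map_char_poly.
  have [r ->] := dvdpP _ _ qdv.
  by rewrite rmorphM rootM qz orbT.
have ev : eigenvalue (map_mx f A) z by rewrite eigenvalue_root_char.
have [_ irr] := airr L f.
have inv : forall h, h \in H -> (eigenspace (map_mx f A) z *m map_mx f (sigma h) <= eigenspace (map_mx f A) z)%MS.
  move=> h hH.
  have cB : (map_mx f A - z%:M) *m map_mx f (sigma h) = map_mx f (sigma h) *m (map_mx f A - z%:M).
    by rewrite mulmxBl mulmxBr -!map_mxM comm // scalar_mxC.
  by rewrite sub_kermx -mulmxA -cB mulmxA mulmx_ker mul0mx.
have [U0|UF] := irr _ inv.
  by rewrite /eigenvalue U0 eqxx in ev.
have : \rank (map_mx f A - z%:M) = 0%N.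
  move: UF; rewrite /row_full /eigenspace mxrank_ker => /eqP.
  have := rank_leq_col (map_mx f A - z%:M). move=> _ h2; apply/eqP; apply: contraTT (eqxx n.+1) => r0; rewrite -{1}h2 neq_ltn ltn_subrL lt0n r0 //=.
move/eqP; rewrite mxrank_eq0 subr_eq0 => /eqP Ez.
have ez : z = f (A ord0 ord0).
  have := congr1 (fun M : 'M[L]_n.+1 => M ord0 ord0) Ez. by rewrite !mxE eqxx mulr1n => ->.
apply: (@map_mx_inj _ _ f); by rewrite map_scalar_mx -ez.
Qed.
Unset Implicit Arguments.
Theorem lemma2p6 (G : groupType) (k : fieldType) (n : nat)
  (rho rho' : G -> 'M[k]_n) :
  is_rep rho -> is_rep rho' ->
  (forall g : G, \det (rho g) = \det (rho' g)) ->
  (exists H : {pred G},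
     [/\ is_normal_subgroup H, abs_irreducible_on H rho,
         abs_irreducible_on H rho' & iso_on H rho rho']) ->
  exists G' : {pred G},
    [/\ is_subgroup G', finite_index G' & iso_on G' rho rho'].
Proof.
case: n rho rho' => [|n] rho rho' [r1 rM] [r1' rM'] hdet
  [H [[[H1 [HM HV]] Hn] airr airr' [P Pu PH]]].
  by have [] := airr k (idfun : {rmorphism k -> k}).
have rV g : rho g *m rho (g^-1)%g = 1%:M by rewrite -rM mulgV r1.
have rV' g : rho' g *m rho' (g^-1)%g = 1%:M by rewrite -rM' mulgV r1'.
have rVl' g : rho' (g^-1)%g *m rho' g = 1%:M by rewrite -rM' mulVg r1'.
have ru' g : rho' g \in unitmx by case: (mulmx1_unit (rV' g)).
have Mu g : rho' g *m P \in unitmx by rewrite unitmx_mul ru' Pu.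
have key g : exists d, P *m rho g = d *: (rho' g *m P).
  pose Q := rho' (g^-1)%g *m P *m rho g.
  have QH h : h \in H -> Q *m rho h = rho' h *m Q.
    move=> hH; pose h' := ((g^-1)^-1 * h * g^-1)%g.
    have h'H : h' \in H by apply: Hn.
    have e1 : (g * h = h' * g)%g by rewrite /h' invgK mulgVK.
    have e2 : (g^-1 * h' = h * g^-1)%g by rewrite /h' invgK -!mulgA mulKg.
    rewrite /Q -!mulmxA -rM e1 rM !mulmxA -(mulmxA (rho' _) P) PH // mulmxA -rM' e2 rM'.
    by [].
  pose A := invmx P *m Q.
  have AH h : h \in H -> A *m rho h = rho h *m A.
    move=> hH.
    have iP : invmx P *m rho' h = rho h *m invmx P.
      by rewrite -[rho h](mulKmx Pu) PH // -!mulmxA mulmxV // mulmx1.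
    by rewrite /A -mulmxA QH // !mulmxA iP.
  have EA := schur_scalar airr AH.
  exists (A ord0 ord0).
  have : Q = (A ord0 ord0) *: P.
    by rewrite -mul_mx_scalar -EA /A mulmxA mulmxV // mul1mx.
  move=> EQ; rewrite scalemxAr -EQ /Q !mulmxA rV' mul1mx //.
pose c g := (invmx (rho' g *m P) *m (P *m rho g)) ord0 ord0.
have cU g d : P *m rho g = d *: (rho' g *m P) -> c g = d.
  by move=> E; rewrite /c E -scalemxAr mulVmx // scalemx1 mxE eqxx mulr1n.
have cE g : P *m rho g = c g *: (rho' g *m P).
  by have [d E] := key g; rewrite (cU _ _ E).
have cM x y : c (x * y)%g = c x * c y.
  apply: cU; rewrite rM mulmxA cE -scalemxAl -mulmxA cE -scalemxAr scalerA.
  by rewrite mulmxA -rM'.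
have c1 : c 1%g = 1.
  by apply: cU; rewrite r1 r1' mulmx1 mul1mx scale1r.
have cn g : c g ^+ n.+1 = 1.
  have := congr1 (@determinant _ _) (cE g).
  rewrite detZ !det_mulmx hdet mulrC => E.
  have nz : \det (rho' g *m P) != 0 by rewrite -unitfE -unitmxE.
  by apply: (mulIf nz); rewrite mul1r det_mulmx -E.
have cnz g : c g != 0.
  apply/eqP => c0; have := cn g; rewrite c0 expr0n /= => /eqP; rewrite eq_sym oner_eq0 //.
have cV g : c (g^-1)%g = (c g)^-1.
  by apply: (mulIf (cnz g)); rewrite -cM mulVg c1 mulVf.
pose G' : {pred G} := fun g => c g == 1.
have inG' g : (g \in G') = (c g == 1) by [].
exists G'; split.
- split; first by rewrite inG' c1.
  split=> [x y|x]; rewrite !inG' ?cM ?cV => /eqP-> //; first by move=> /eqP->; rewrite mulr1.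
  by rewrite invr1.
- apply: NNPP => nfin.
  have grow m : exists s : seq G, size s = m /\ uniq (map c s).
    elim: m => [|m [s [ss us]]]; first by exists [::].
    have [g hg] : exists g, forall x, x \in s -> c x != c g.
      apply: NNPP => ne; apply: nfin; exists s => g.
      apply: NNPP => ng; apply: ne; exists g => x xs; apply/negP => /eqP e.
      by apply: ng; exists x => //; rewrite inG' cM cV e mulVf.
    exists (g :: s); split; first by rewrite /= ss.
    rewrite /= us andbT; apply/mapP => [[x xs e]].
    by move: (hg x xs); rewrite e eqxx.
  have [s [ss us]] := grow n.+2.
  have sz : size ('X^(n.+1) - 1 : {poly k}) = n.+2.
    by rewrite -polyC1 size_XnsubC.
  have : (size (map c s) < n.+2)%N.
    rewrite -sz; apply: max_poly_roots => //.
      by rewrite -size_poly_eq0 sz.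
    apply/allP => _ /mapP [x _ ->].
    by rewrite rootE !hornerE cn subrr.
  by rewrite size_map ss ltnn.
- exists P => // h; rewrite inG' => /eqP h1.
  by rewrite cE h1 scale1r.
Qed.
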